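(* Let $P$ be a finite point set and $C$ a convex body in the plane. Any algorithm that classifies the points of $P$ in relation to $C$ (i.e. decides for each point of $P$ whether it lies in $C$), using only a separation oracle for $C$, must perform at least $\operatorname{price}(P,C)$ separation oracle queries.
   Context: Separation oracle: given a query point $q\in\mathbb{R}^2$, it either reports $q\in C$, or returns a line separating $q$ from $C$. The outer fence $F_{\mathrm{out}}$ of $P$ is a closed convex polygon with the minimum number of vertices such that $C\subseteq F_{\mathrm{out}}$ and $C\cap P=F_{\mathrm{out}}\cap P$. The inner fence $F_{\mathrm{in}}$ is a closed convex polygon with the minimum number of vertices such that $F_{\mathrm{in}}\subseteq C$ and $C\cap P=F_{\mathrm{in}}\cap P$. The separation price is $\operatorname{price}(P,C)=|V(F_{\mathrm{in}})|+|V(F_{\mathrm{out}})|$, where $|V(F)|$ is the number of vertices of a polygon $F$. *)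

(* Defs.v *)
From Stdlib Require Import Reals Lra List ClassicalEpsilon.
Open Scope R_scope.

Definition point := (R * R)%type.

Definition lin (a b : R) (p : point) : R := a * fst p + b * snd p.

Definition comb (t : R) (x y : point) : point :=
  (t * fst x + (1 - t) * fst y, t * snd x + (1 - t) * snd y).

Definition dist2 (x y : point) : R := (fst x - fst y) ^ 2 + (snd x - snd y) ^ 2.

Definition convex_set (S : point -> Prop) : Prop :=
  forall x y t, S x -> S y -> 0 <= t <= 1 -> S (comb t x y).

Definition closed_set (S : point -> Prop) : Prop :=
  forall x, ~ S x -> exists e, 0 < e /\ forall y, dist2 x y < e -> ~ S y.

Definition bounded_set (S : point -> Prop) : Prop :=
  exists M, forall x, S x -> Rabs (fst x) <= M /\ Rabs (snd x) <= M.

Definition nonempty_interior (S : point -> Prop) : Prop :=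
  exists x e, 0 < e /\ forall y, dist2 x y < e -> S y.

Definition convex_body (C : point -> Prop) : Prop :=
  convex_set C /\ closed_set C /\ bounded_set C /\ nonempty_interior C.

(* closed convex polygon: intersection of finitely many closed half-planes
   a x + b y <= c with (a,b) <> (0,0) (possibly unbounded, possibly empty) *)
Definition polygon (F : point -> Prop) : Prop :=
  exists hs : list (R * R * R),
    (forall h, In h hs -> let '(a, b, _) := h in a <> 0 \/ b <> 0) /\
    forall p, F p <-> (forall h, In h hs -> let '(a, b, c) := h in lin a b p <= c).

Definition vertex (F : point -> Prop) (x : point) : Prop :=
  F x /\ forall y z t, F y -> F z -> 0 < t < 1 -> x = comb t y z -> y = x /\ z = x.

Definition num_vertices (F : point -> Prop) (n : nat) : Prop :=
  exists l : list point, NoDup l /\ length l = n /\ forall x, In x l <-> vertex F x.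

Definition inner_fence (P : list point) (C F : point -> Prop) : Prop :=
  polygon F /\ (forall x, F x -> C x) /\ (forall p, In p P -> (C p <-> F p)).

Definition outer_fence (P : list point) (C F : point -> Prop) : Prop :=
  polygon F /\ (forall x, C x -> F x) /\ (forall p, In p P -> (C p <-> F p)).

Definition min_vertices (Fence : (point -> Prop) -> Prop) : nat :=
  epsilon (inhabits 0%nat)
    (fun n => (exists F, Fence F /\ num_vertices F n) /\
              forall m F, Fence F -> num_vertices F m -> (n <= m)%nat).

Definition price (P : list point) (C : point -> Prop) : nat :=
  (min_vertices (inner_fence P C) + min_vertices (outer_fence P C))%nat.

Inductive answer : Type :=
| Inside
| Separate (a b c : R).

Definition valid_answer (C : point -> Prop) (q : point) (ans : answer) : Prop :=
  match ans with
  | Inside => C q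
  | Separate a b c =>
      (a <> 0 \/ b <> 0) /\ lin a b q > c /\ (forall z, C z -> lin a b z <= c)
  end.

Definition separation_oracle (C : point -> Prop) (O : point -> answer) : Prop :=
  forall q, valid_answer C q (O q).

(* A deterministic adaptive algorithm accessing C only through the oracle:
   a (well-founded) decision tree; every run terminates. *)
Inductive algorithm : Type :=
| Output (cls : point -> bool)
| Query (q : point) (next : answer -> algorithm).

Fixpoint run (A : algorithm) (O : point -> answer) : point -> bool :=
  match A with
  | Output cls => cls
  | Query q k => run (k (O q)) O
  end.

Fixpoint num_queries (A : algorithm) (O : point -> answer) : nat :=
  match A with
  | Output _ => 0%nat
  | Query q k => S (num_queries (k (O q)) O)
  end.

Definition classifies (P : list point) (A : algorithm) : Prop :=
  forall C', convex_body C' -> forall O', separation_oracle C' O' ->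
    forall p, In p P -> (run A O' p = true <-> C' p).

(* Main.v *)
Require Import Defs.
From Stdlib Require Import Reals List.
From Stdlib Require Import Lra Lia Classical ClassicalEpsilon.
Import ListNotations.
Open Scope R_scope.

Fixpoint dot (u v : list R) : R :=
  match u, v with a :: u', b :: v' => a * b + dot u' v' | _, _ => 0 end.
Fixpoint vadd (u v : list R) : list R :=
  match u, v with
  | a :: u', b :: v' => (a + b) :: vadd u' v'
  | [], v => v
  | u, [] => u
  end.
Definition vscale (k : R) (u : list R) := map (Rmult k) u.

Lemma dot_nil_r u : dot u [] = 0.
Proof. destruct u; reflexivity. Qed.

Lemma dot_vadd u v w : dot (vadd u v) w = dot u w + dot v w.
Proof.
  revert v w; induction u as [|a u IH]; intros v w; simpl.
  - destruct w; simpl; [rewrite dot_nil_r|]; ring.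
  - destruct v as [|b v]; destruct w as [|c w]; simpl; try ring.
    rewrite IH; ring.
Qed.

Lemma dot_vscale k u w : dot (vscale k u) w = k * dot u w.
Proof.
  revert w; induction u as [|a u IH]; intros w; simpl.
  - destruct w; simpl; ring.
  - destruct w; simpl; [ring|]. unfold vscale in IH. rewrite IH; ring.
Qed.

Lemma dot_opp u w : dot (map Ropp u) w = - dot u w.
Proof.
  revert w; induction u as [|a u IH]; intros w; simpl.
  - destruct w; simpl; ring.
  - destruct w; simpl; [ring|]. rewrite IH; ring.
Qed.

Record row := mkRow { rc : list R; ra : R; rb : R; rk : R }.

Definition rsat (r : row) (lam : list R) (x : point) : Prop :=
  dot (rc r) lam + lin (ra r) (rb r) x <= rk r.

Definition alpha (r : row) : R := hd 0 (rc r).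
Definition rest (r : row) : list R := tl (rc r).
Definition rval (r : row) (lam : list R) (x : point) : R :=
  dot (rest r) lam + lin (ra r) (rb r) x.

Lemma rsat_cons r t lam x : rsat r (t :: lam) x <-> alpha r * t + rval r lam x <= rk r.
Proof.
  unfold rsat, alpha, rval, rest. destruct (rc r) as [|a u]; simpl.
  - destruct lam; simpl; split; intro; lra.
  - split; intro; lra.
Qed.

Definition drop0 (r : row) : row := mkRow (rest r) (ra r) (rb r) (rk r).
Definition combo (p n : row) : row :=
  mkRow (vadd (vscale (- alpha n) (rest p)) (vscale (alpha p) (rest n)))
        (- alpha n * ra p + alpha p * ra n)
        (- alpha n * rb p + alpha p * rb n)
        (- alpha n * rk p + alpha p * rk n).

Lemma rsat_combo p n lam x :
  rsat (combo p n) lam x <->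
  - alpha n * rval p lam x + alpha p * rval n lam x <= - alpha n * rk p + alpha p * rk n.
Proof.
  unfold rsat, combo, rval; simpl. rewrite dot_vadd, !dot_vscale. unfold lin.
  split; intro H; lra.
Qed.

Lemma rsat_drop0 r lam x : rsat (drop0 r) lam x <-> rval r lam x <= rk r.
Proof. unfold rsat, drop0, rval; simpl. tauto. Qed.

Definition isPos (r : row) : bool := if Rlt_dec 0 (alpha r) then true else false.
Definition isNeg (r : row) : bool := if Rlt_dec (alpha r) 0 then true else false.
Definition isZero (r : row) : bool := if Req_EM_T (alpha r) 0 then true else false.

Definition elim (S : list row) : list row :=
  map drop0 (filter isZero S) ++
  flat_map (fun p => map (combo p) (filter isNeg S)) (filter isPos S).

Lemma exists_between (Ls Us : list R) :
  (forall l u, In l Ls -> In u Us -> l <= u) ->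
  exists t, (forall l, In l Ls -> l <= t) /\ (forall u, In u Us -> t <= u).
Proof.
  induction Ls as [|l Ls IH]; intros H.
  - clear H. induction Us as [|u Us IHU].
    + exists 0. split; intros ? [].
    + destruct IHU as [t [_ Ht]]. exists (Rmin u t). split; [intros ? []|].
      intros v [<-|Hv]; [apply Rmin_l|]. eapply Rle_trans; [apply Rmin_r|]. auto.
  - destruct IH as [t [H1 H2]].
    { intros; apply H; simpl; auto. }
    exists (Rmax l t). split.
    + intros v [<-|Hv]; [apply Rmax_l|]. eapply Rle_trans; [apply H1; auto|apply Rmax_r].
    + intros u Hu. apply Rmax_lub; [apply H; simpl; auto|auto].
Qed.

Lemma div_le_lem A B u v : 0 < A -> 0 < B -> B * u <= A * v -> u / A <= v / B.
Proof.
  intros HA HB H. apply (Rmult_le_reg_r (A * B)); [nra|].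
  replace (u / A * (A * B)) with (B * u) by (field; lra).
  replace (v / B * (A * B)) with (A * v) by (field; lra). exact H.
Qed.

Lemma elim_spec S lam x :
  (exists t, forall r, In r S -> rsat r (t :: lam) x) <->
  (forall r, In r (elim S) -> rsat r lam x).
Proof.
  split.
  - intros [t Ht] r Hr. unfold elim in Hr. apply in_app_or in Hr as [Hr|Hr].
    + apply in_map_iff in Hr as [r0 [<- Hr0]]. apply filter_In in Hr0 as [Hr0 Hz].
      unfold isZero in Hz. destruct (Req_EM_T (alpha r0) 0) as [Ha|]; [|discriminate].
      apply rsat_drop0. apply Ht, rsat_cons in Hr0. rewrite Ha in Hr0. lra.
    + apply in_flat_map in Hr as [p [Hp Hr]]. apply in_map_iff in Hr as [n [<- Hn]].
      apply filter_In in Hp as [Hp Pp]. apply filter_In in Hn as [Hn Pn].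
      unfold isPos in Pp; unfold isNeg in Pn.
      destruct (Rlt_dec 0 (alpha p)); [|discriminate].
      destruct (Rlt_dec (alpha n) 0); [|discriminate].
      apply Ht, rsat_cons in Hp. apply Ht, rsat_cons in Hn.
      apply rsat_combo.
      assert (0 <= - alpha n * (rk p - alpha p * t - rval p lam x)) by (apply Rmult_le_pos; lra).
      assert (0 <= alpha p * (rk n - alpha n * t - rval n lam x)) by (apply Rmult_le_pos; lra).
      nra.
  - intros H.
    set (f := fun r => (rk r - rval r lam x) / alpha r).
    destruct (exists_between (map f (filter isNeg S)) (map f (filter isPos S))) as [t [H1 H2]].
    { intros l u Hl Hu. apply in_map_iff in Hl as [n [<- Hn]].
      apply in_map_iff in Hu as [p [<- Hp]].
      assert (Hc : In (combo p n) (elim S)).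
      { unfold elim. apply in_or_app. right. apply in_flat_map. exists p. split; auto.
        apply in_map. auto. }
      apply H, rsat_combo in Hc.
      apply filter_In in Hp as [_ Pp]. apply filter_In in Hn as [_ Pn].
      unfold isPos in Pp; unfold isNeg in Pn.
      destruct (Rlt_dec 0 (alpha p)); [|discriminate].
      destruct (Rlt_dec (alpha n) 0); [|discriminate].
      unfold f. replace ((rk n - rval n lam x) / alpha n) with ((rval n lam x - rk n) / (- alpha n)) by (field; lra).
      apply div_le_lem; lra. }
    exists t. intros r Hr. apply rsat_cons.
    destruct (Rtotal_order (alpha r) 0) as [Hn|[Hz|Hp]].
    + assert (Hl : f r <= t).
      { apply H1, in_map, filter_In. split; auto. unfold isNeg. destruct (Rlt_dec (alpha r) 0); auto; lra. }
      unfold f in Hl.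
      assert (alpha r * t <= alpha r * ((rk r - rval r lam x) / alpha r)) by (apply Rmult_le_compat_neg_l; lra).
      replace (alpha r * ((rk r - rval r lam x) / alpha r)) with (rk r - rval r lam x) in H0 by (field; lra).
      lra.
    + assert (Hd : rsat (drop0 r) lam x).
      { apply H. unfold elim. apply in_or_app. left. apply in_map, filter_In. split; auto.
        unfold isZero. destruct (Req_EM_T (alpha r) 0); auto. }
      apply rsat_drop0 in Hd. rewrite Hz. lra.
    + assert (Hl : t <= f r).
      { apply H2, in_map, filter_In. split; auto. unfold isPos. destruct (Rlt_dec 0 (alpha r)); auto; lra. }
      unfold f in Hl.
      assert (alpha r * t <= alpha r * ((rk r - rval r lam x) / alpha r)) by (apply Rmult_le_compat_l; lra).
      replace (alpha r * ((rk r - rval r lam x) / alpha r)) with (rk r - rval r lam x) in H0 by (field; lra).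
      lra.
Qed.

Fixpoint elimN (n : nat) (S : list row) : list row :=
  match n with O => S | S n' => elimN n' (elim S) end.

Lemma elimN_spec n : forall S x,
  (exists lam, length lam = n /\ forall r, In r S -> rsat r lam x) <->
  (forall r, In r (elimN n S) -> rsat r [] x).
Proof.
  induction n as [|n IH]; intros S x; simpl.
  - split.
    + intros [lam [Hl H]]. destruct lam; [auto|discriminate].
    + intros H. exists []. auto.
  - rewrite <- IH. split.
    + intros [lam [Hl H]]. destruct lam as [|t lam]; [discriminate|].
      exists lam. split; [simpl in Hl; lia|]. apply elim_spec. exists t. auto.
    + intros [lam [Hl H]]. apply elim_spec in H as [t Ht]. exists (t :: lam).
      split; [simpl; lia|auto].
Qed.

Definition sumR (l : list R) : R := fold_right Rplus 0 l.

Definition convl (Q : list point) (x : point) : Prop :=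
  exists lam, length lam = length Q /\ Forall (fun v => 0 <= v) lam /\ sumR lam = 1 /\
    fst x = dot (map fst Q) lam /\ snd x = dot (map snd Q) lam.

Fixpoint unitv (i : nat) : list R := match i with O => [1] | S i => 0 :: unitv i end.

Lemma dot_unitv i lam : dot (unitv i) lam = nth i lam 0.
Proof.
  revert lam; induction i; intros [|a lam]; simpl.
  - reflexivity.
  - destruct lam; simpl; ring.
  - destruct i; reflexivity.
  - rewrite IHi; ring.
Qed.

Lemma dot_ones lam : dot (repeat 1 (length lam)) lam = sumR lam.
Proof. induction lam; simpl; [reflexivity|]. rewrite IHlam; ring. Qed.

Definition hullrows (Q : list point) : list row :=
  map (fun i => mkRow (map Ropp (unitv i)) 0 0 0) (seq 0 (length Q)) ++
  [mkRow (repeat 1 (length Q)) 0 0 1; mkRow (map Ropp (repeat 1 (length Q))) 0 0 (-1);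
   mkRow (map Ropp (map fst Q)) 1 0 0; mkRow (map fst Q) (-1) 0 0;
   mkRow (map Ropp (map snd Q)) 0 1 0; mkRow (map snd Q) 0 (-1) 0].

Lemma hullrows_spec Q lam x : length lam = length Q ->
  ((forall r, In r (hullrows Q) -> rsat r lam x) <->
   (Forall (fun v => 0 <= v) lam /\ sumR lam = 1 /\
    fst x = dot (map fst Q) lam /\ snd x = dot (map snd Q) lam)).
Proof.
  intros Hl. unfold hullrows. rewrite <- Hl. split.
  - intros H.
    assert (Hs1 := H (mkRow (repeat 1 (length lam)) 0 0 1) ltac:(apply in_or_app; right; simpl; tauto)).
    assert (Hs2 := H (mkRow (map Ropp (repeat 1 (length lam))) 0 0 (-1)) ltac:(apply in_or_app; right; simpl; tauto)).
    assert (Hx1 := H (mkRow (map Ropp (map fst Q)) 1 0 0) ltac:(apply in_or_app; right; simpl; tauto)).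
    assert (Hx2 := H (mkRow (map fst Q) (-1) 0 0) ltac:(apply in_or_app; right; simpl; tauto)).
    assert (Hy1 := H (mkRow (map Ropp (map snd Q)) 0 1 0) ltac:(apply in_or_app; right; simpl; tauto)).
    assert (Hy2 := H (mkRow (map snd Q) 0 (-1) 0) ltac:(apply in_or_app; right; simpl; tauto)).
    unfold rsat, lin in *; simpl in *. rewrite ?dot_opp, ?dot_ones in *.
    split; [|lra]. apply Forall_nth. intros i d Hi.
    assert (Hn := H (mkRow (map Ropp (unitv i)) 0 0 0)).
    unfold rsat, lin in Hn; simpl in Hn. rewrite dot_opp, dot_unitv in Hn.
    rewrite nth_indep with (d' := 0) by exact Hi.
    assert (-nth i lam 0 + (0 * fst x + 0 * snd x) <= 0); [|lra].
    apply Hn. apply in_or_app. left. apply in_map_iff. exists i. split; auto.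
    apply in_seq. lia.
  - intros [Hf [Hs [Hx Hy]]] r Hr. apply in_app_or in Hr as [Hr|Hr].
    + apply in_map_iff in Hr as [i [<- Hi]]. apply in_seq in Hi.
      unfold rsat, lin; simpl. rewrite dot_opp, dot_unitv.
      rewrite Forall_nth in Hf. specialize (Hf i 0 ltac:(lia)). lra.
    + simpl in Hr. unfold rsat, lin.
      repeat (destruct Hr as [<-|Hr]; [simpl; rewrite ?dot_opp, ?dot_ones; lra|]). destruct Hr.
Qed.

Definition hp (hs : list (R * R * R)) (x : point) : Prop :=
  forall h, In h hs -> let '(a, b, c) := h in lin a b x <= c.
Definition nz (hs : list (R * R * R)) : Prop :=
  forall h, In h hs -> let '(a, b, _) := h in a <> 0 \/ b <> 0.

Definition normrow (r : row) : list (R * R * R) :=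
  if Req_EM_T (ra r) 0 then
    if Req_EM_T (rb r) 0 then
      if Rle_dec 0 (rk r) then [] else [(1, 0, -1); (-1, 0, -1)]
    else [(ra r, rb r, rk r)]
  else [(ra r, rb r, rk r)].

Lemma normrows_nz rows : nz (flat_map normrow rows).
Proof.
  intros h Hh. apply in_flat_map in Hh as [r [_ Hh]]. unfold normrow in Hh.
  destruct (Req_EM_T (ra r) 0); [destruct (Req_EM_T (rb r) 0); [destruct (Rle_dec 0 (rk r))|]|];
  simpl in Hh; repeat (destruct Hh as [<-|Hh]; [lra|]); destruct Hh.
Qed.

Lemma normrows_spec rows x :
  (forall r, In r rows -> rsat r [] x) <-> hp (flat_map normrow rows) x.
Proof.
  split.
  - intros H h Hh. apply in_flat_map in Hh as [r [Hr Hh]]. specialize (H r Hr).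
    unfold rsat in H. rewrite dot_nil_r in H. unfold normrow in Hh. unfold lin in *.
    destruct (Req_EM_T (ra r) 0); [destruct (Req_EM_T (rb r) 0); [destruct (Rle_dec 0 (rk r))|]|];
    try (rewrite e, e0 in H);
    simpl in Hh; repeat (destruct Hh as [<-|Hh]; [simpl; lra|]); destruct Hh.
  - intros H r Hr. unfold rsat. rewrite dot_nil_r.
    assert (Hin : forall h, In h (normrow r) -> In h (flat_map normrow rows)).
    { intros h Hh. apply in_flat_map. eauto. }
    unfold normrow in Hin. unfold lin in *.
    destruct (Req_EM_T (ra r) 0); [destruct (Req_EM_T (rb r) 0); [destruct (Rle_dec 0 (rk r))|]|].
    + rewrite e, e0. lra.
    + assert (H1 := H _ (Hin _ ltac:(simpl; tauto))). assert (H2 := H _ (Hin _ ltac:(simpl; right; tauto))).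
      simpl in H1, H2. unfold lin in H1, H2. lra.
    + assert (H1 := H _ (Hin _ ltac:(simpl; tauto))). simpl in H1. unfold lin in H1. lra.
    + assert (H1 := H _ (Hin _ ltac:(simpl; tauto))). simpl in H1. unfold lin in H1. lra.
Qed.

Lemma convl_hp Q : exists hs, nz hs /\ forall x, convl Q x <-> hp hs x.
Proof.
  exists (flat_map normrow (elimN (length Q) (hullrows Q))). split; [apply normrows_nz|].
  intros x. rewrite <- normrows_spec, <- elimN_spec. unfold convl. split.
  - intros [lam [Hl H]]. exists lam. split; auto. apply hullrows_spec; auto.
  - intros [lam [Hl H]]. exists lam. split; auto. apply hullrows_spec; auto.
Qed.

Lemma convl_polygon Q : polygon (convl Q).
Proof. destruct (convl_hp Q) as [hs [H1 H2]]. exists hs. split; auto. Qed.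

Lemma sumR_nonneg l : Forall (fun v => 0 <= v) l -> 0 <= sumR l.
Proof. induction 1; simpl; lra. Qed.

Lemma sumR_zero_dot l u : Forall (fun v => 0 <= v) l -> sumR l = 0 -> dot u l = 0.
Proof.
  intros Hf; revert u; induction Hf as [|a l Ha Hf IH]; intros u Hs.
  - apply dot_nil_r.
  - simpl in Hs. pose proof (sumR_nonneg _ Hf).
    destruct u as [|b u]; simpl; [reflexivity|]. rewrite IH by lra.
    replace a with 0 by lra. ring.
Qed.

Lemma dot_divr u l k : dot u (map (fun v => v / k) l) = dot u l / k.
Proof.
  revert l; induction u as [|a u IH]; intros [|b l]; simpl; unfold Rdiv; try ring.
  unfold Rdiv in IH. rewrite IH. ring.
Qed.

Lemma sumR_div l k : sumR (map (fun v => v / k) l) = sumR l / k.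
Proof. induction l; simpl; unfold Rdiv in *; [ring|]. rewrite IHl; ring. Qed.

Lemma point_eq (x y : point) : fst x = fst y -> snd x = snd y -> x = y.
Proof. destruct x, y; simpl; intros -> ->; reflexivity. Qed.

Lemma convl_split q Q x : convl (q :: Q) x ->
  x = q \/ exists t y, 0 <= t < 1 /\ convl Q y /\ x = comb t q y.
Proof.
  intros [lam [Hl [Hf [Hs [Hx Hy]]]]].
  destruct lam as [|l0 lam]; [discriminate|]. simpl in Hl, Hs, Hx, Hy.
  inversion Hf as [|? ? H0 Hf']; subst.
  pose proof (sumR_nonneg _ Hf').
  destruct (Req_EM_T l0 1) as [E|E].
  - left. apply point_eq.
    + rewrite Hx, sumR_zero_dot by (auto; lra). rewrite E; ring.
    + rewrite Hy, sumR_zero_dot by (auto; lra). rewrite E; ring.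
  - right. exists l0, (dot (map fst Q) lam / (1 - l0), dot (map snd Q) lam / (1 - l0)).
    split; [lra|]. split.
    + exists (map (fun v => v / (1 - l0)) lam). split; [rewrite length_map; lia|].
      split; [|split; [|split]].
      * apply Forall_map. eapply Forall_impl; [|exact Hf']. intros v Hv; simpl.
        unfold Rdiv; apply Rmult_le_pos; [lra|apply Rlt_le, Rinv_0_lt_compat; lra].
      * rewrite sumR_div. replace (sumR lam) with (1 - l0) by lra. field; lra.
      * simpl. rewrite dot_divr. reflexivity.
      * simpl. rewrite dot_divr. reflexivity.
    + apply point_eq; unfold comb; simpl; [rewrite Hx|rewrite Hy]; field; lra.
Qed.

Lemma convl_nil x : ~ convl [] x.
Proof. intros [lam [Hl [_ [Hs _]]]]. destruct lam; [simpl in Hs; lra|discriminate]. Qed.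

Lemma convl_sub (S : point -> Prop) Q : convex_set S -> (forall q, In q Q -> S q) ->
  forall x, convl Q x -> S x.
Proof.
  intros HS. induction Q as [|q Q IH]; intros HQ x Hx.
  - exfalso; eapply convl_nil; eauto.
  - apply convl_split in Hx as [->|[t [y [Ht [Hy ->]]]]].
    + apply HQ; simpl; auto.
    + apply HS; [apply HQ; simpl; auto| |lra]. apply IH; auto. intros; apply HQ; simpl; auto.
Qed.

Lemma convl_cons q Q x : convl Q x -> convl (q :: Q) x.
Proof.
  intros [lam [Hl [Hf [Hs [Hx Hy]]]]]. exists (0 :: lam). simpl.
  split; [lia|]. split; [constructor; auto; lra|]. rewrite Hx, Hy. split; [lra|]. split; ring.
Qed.

Lemma convl_head q Q : convl (q :: Q) q.
Proof.
  exists (1 :: repeat 0 (length Q)). simpl. rewrite repeat_length. split; [reflexivity|].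
  assert (Hf : Forall (fun v => 0 <= v) (repeat 0 (length Q))).
  { apply Forall_forall. intros v Hv. apply repeat_spec in Hv. lra. }
  assert (Hs : sumR (repeat 0 (length Q)) = 0).
  { clear Hf. induction (length Q) as [|n IHn]; simpl; [reflexivity|]. rewrite IHn. ring. }
  split; [constructor; auto; lra|]. rewrite Hs, !sumR_zero_dot by auto. split; [ring|]. split; ring.
Qed.

Lemma convl_in q Q : In q Q -> convl Q q.
Proof.
  induction Q as [|q' Q IH]; intros H; [destruct H|].
  destruct H as [<-|H]; [apply convl_head|apply convl_cons; auto].
Qed.

Lemma convl_app_r Q1 Q2 x : convl Q2 x -> convl (Q1 ++ Q2) x.
Proof. induction Q1; simpl; auto. intros; apply convl_cons; auto. Qed.

Definition extreme (F : point -> Prop) (x : point) : Prop :=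
  forall y z t, F y -> F z -> 0 < t < 1 -> x = comb t y z -> y = x /\ z = x.

Lemma comb0 q y : comb 0 q y = y.
Proof. apply point_eq; unfold comb; simpl; ring. Qed.

Lemma convl_extreme_in (F : point -> Prop) Q : (forall y, convl Q y -> F y) ->
  forall x, convl Q x -> extreme F x -> In x Q.
Proof.
  induction Q as [|q Q IH]; intros HF x Hx He.
  - exfalso; eapply convl_nil; eauto.
  - apply convl_split in Hx as [->|[t [y [Ht [Hy ->]]]]]; [simpl; auto|].
    destruct (Req_EM_T t 0) as [->|Ht0].
    + rewrite comb0 in *. right. apply IH; auto. intros; apply HF, convl_cons; auto.
    + assert (E := He q y t (HF _ (convl_head _ _)) (HF _ (convl_cons _ _ _ Hy)) ltac:(lra) eq_refl).
      left. exact (proj1 E).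
Qed.

Lemma halfplane_convex a b c : convex_set (fun z => lin a b z <= c).
Proof.
  intros x y t Hx Hy Ht. unfold lin, comb in *; simpl.
  assert (t * (a * fst x + b * snd x) <= t * c) by (apply Rmult_le_compat_l; lra).
  assert ((1 - t) * (a * fst y + b * snd y) <= (1 - t) * c) by (apply Rmult_le_compat_l; lra).
  nra.
Qed.

Lemma hp_convex hs : convex_set (hp hs).
Proof.
  intros x y t Hx Hy Ht h Hh. destruct h as [[a b] c].
  apply (halfplane_convex a b c); auto; [apply (Hx _ Hh)|apply (Hy _ Hh)].
Qed.

Lemma hp_violated hs x : ~ hp hs x -> exists a b c, In (a, b, c) hs /\ c < lin a b x.
Proof.
  intros H. apply NNPP; intro N. apply H. intros [[a b] c] Hh.
  apply Rnot_lt_le; intro. apply N; eauto.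
Qed.

Lemma sq_bound v w : 0 < w -> v ^ 2 < w ^ 2 -> Rabs v < w.
Proof. intros Hw H. unfold Rabs; destruct (Rcase_abs v); nra. Qed.

Lemma mul_abs_le a u d : Rabs u < d -> a * u <= Rabs a * d.
Proof.
  intros H. apply Rle_trans with (Rabs (a * u)); [apply Rle_abs|].
  rewrite Rabs_mult. apply Rmult_le_compat_l; [apply Rabs_pos|lra].
Qed.

Lemma hp_closed hs : Defs.closed_set (hp hs).
Proof.
  intros x Hx. destruct (hp_violated _ _ Hx) as [a [b [c [Hin Hc]]]].
  set (K := Rabs a + Rabs b + 1).
  assert (HK : 0 < K) by (unfold K; pose proof (Rabs_pos a); pose proof (Rabs_pos b); lra).
  set (d := (lin a b x - c) / K).
  assert (Hd : 0 < d) by (unfold d; apply Rdiv_lt_0_compat; lra).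
  assert (HKd : K * d = lin a b x - c) by (unfold d; field; lra).
  exists (d ^ 2). split; [nra|]. intros y Hy Hy'.
  specialize (Hy' _ Hin). simpl in Hy'. unfold dist2 in Hy.
  assert (H1 : Rabs (fst x - fst y) < d) by (apply sq_bound; auto; pose proof (pow2_ge_0 (snd x - snd y)); lra).
  assert (H2 : Rabs (snd x - snd y) < d) by (apply sq_bound; auto; pose proof (pow2_ge_0 (fst x - fst y)); lra).
  apply (mul_abs_le a) in H1. apply (mul_abs_le b) in H2.
  unfold K in HKd. unfold lin in *. nra.
Qed.

Definition padd (v : point) (e : R) (d : point) : point :=
  (fst v + e * fst d, snd v + e * snd d).

Lemma lin_padd a b v e d : lin a b (padd v e d) = lin a b v + e * lin a b d.
Proof. unfold lin, padd; simpl; ring. Qed.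

Lemma perturb hs v d : hp hs v ->
  (forall a b c, In (a, b, c) hs -> lin a b v = c -> lin a b d = 0) ->
  exists e, 0 < e /\ forall a b c, In (a, b, c) hs -> lin a b v + e * Rabs (lin a b d) <= c.
Proof.
  induction hs as [|[[a b] c] hs IH]; intros Hv Ht.
  - exists 1. split; [lra|]. intros ? ? ? [].
  - destruct IH as [e1 [He1 H1]].
    { intros h Hh. apply Hv; simpl; auto. }
    { intros; eapply Ht; simpl; eauto. }
    assert (Hc : lin a b v <= c) by exact (Hv _ (or_introl eq_refl)).
    destruct (Req_EM_T (lin a b v) c) as [E|E].
    + exists e1. split; auto. intros a' b' c' [Eq|Hin].
      * injection Eq as <- <- <-. rewrite (Ht a b c (or_introl eq_refl) E). rewrite Rabs_R0. lra.
      * auto.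
    + set (K := Rabs (lin a b d) + 1).
      assert (HK : 0 < K) by (unfold K; pose proof (Rabs_pos (lin a b d)); lra).
      exists (Rmin e1 ((c - lin a b v) / K)). split.
      { apply Rmin_glb_lt; auto. apply Rdiv_lt_0_compat; lra. }
      intros a' b' c' [Eq|Hin].
      * injection Eq as <- <- <-.
        assert (Hm : Rmin e1 ((c - lin a b v) / K) * K <= c - lin a b v).
        { apply Rle_trans with ((c - lin a b v) / K * K); [apply Rmult_le_compat_r; [lra|apply Rmin_r]|].
          right; field; lra. }
        assert (0 < Rmin e1 ((c - lin a b v) / K)) by (apply Rmin_glb_lt; auto; apply Rdiv_lt_0_compat; lra).
        assert (Hk : Rmin e1 ((c - lin a b v) / K) * K = Rmin e1 ((c - lin a b v) / K) * Rabs (lin a b d) + Rmin e1 ((c - lin a b v) / K)) by (unfold K; ring). lra.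
      * specialize (H1 _ _ _ Hin).
        assert (Rmin e1 ((c - lin a b v) / K) * Rabs (lin a' b' d) <= e1 * Rabs (lin a' b' d)).
        { apply Rmult_le_compat_r; [apply Rabs_pos|apply Rmin_l]. }
        lra.
Qed.

Lemma vertex_two hs v : nz hs -> vertex (hp hs) v ->
  exists a1 b1 c1 a2 b2 c2, In (a1, b1, c1) hs /\ In (a2, b2, c2) hs /\
    lin a1 b1 v = c1 /\ lin a2 b2 v = c2 /\ a1 * b2 - a2 * b1 <> 0.
Proof.
  intros Hnz [Hv He]. apply NNPP; intro N.
  assert (Hd : exists d, (fst d <> 0 \/ snd d <> 0) /\
            forall a b c, In (a, b, c) hs -> lin a b v = c -> lin a b d = 0).
  { destruct (classic (exists a1 b1 c1, In (a1, b1, c1) hs /\ lin a1 b1 v = c1))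
      as [[a1 [b1 [c1 [H1 T1]]]]|NT].
    - exists (- b1, a1). split.
      + specialize (Hnz _ H1). simpl in *. destruct Hnz; [right|left]; lra.
      + intros a b c H T. apply NNPP; intro Ne. apply N.
        exists a1, b1, c1, a, b, c. repeat split; auto. unfold lin in Ne; simpl in Ne.
        intro E; apply Ne; lra.
    - exists (1, 0). split; [simpl; left; lra|]. intros a b c H T. exfalso; apply NT; eauto. }
  destruct Hd as [d [Hdn Hd]].
  destruct (perturb hs v d Hv Hd) as [e [He0 Hb]].
  assert (Hp : forall s, -1 <= s <= 1 -> hp hs (padd v (s * e) d)).
  { intros s Hs [[a b] c] Hin. rewrite lin_padd. specialize (Hb _ _ _ Hin).
    assert (s * e * lin a b d <= e * Rabs (lin a b d)).
    { apply Rle_trans with (Rabs (s * e * lin a b d)); [apply Rle_abs|].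
      rewrite !Rabs_mult. rewrite (Rabs_right e) by lra.
      assert (Rabs s <= 1) by (apply Rabs_le; lra).
      pose proof (Rabs_pos s). pose proof (Rabs_pos (lin a b d)). assert (0 <= (1 - Rabs s) * (e * Rabs (lin a b d))) by (apply Rmult_le_pos; [lra|apply Rmult_le_pos; lra]). lra. }
    lra. }
  assert (E := He (padd v (1 * e) d) (padd v (-1 * e) d) (1/2) (Hp 1 ltac:(lra)) (Hp (-1) ltac:(lra)) ltac:(lra)
           ltac:(apply point_eq; unfold comb, padd; simpl; field)).
  destruct E as [E _]. unfold padd in E. assert (E1 := f_equal fst E); assert (E2 := f_equal snd E); simpl in E1, E2.
  destruct Hdn as [Hdn|Hdn]; apply Hdn; nra.
Qed.

Definition sP (a b : R) (p : point) : R := - b * fst p + a * snd p.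

Lemma line_uniq a b p q : (a <> 0 \/ b <> 0) -> lin a b p = lin a b q -> sP a b p = sP a b q -> p = q.
Proof.
  intros Hab H1 H2.
  assert (Hn : a * a + b * b <> 0) by (destruct Hab; nra).
  apply point_eq.
  - assert (E : (a * a + b * b) * (fst p - fst q) = a * (lin a b p - lin a b q) - b * (sP a b p - sP a b q))
      by (unfold lin, sP; ring).
    rewrite H1, H2 in E. replace (a * (lin a b q - lin a b q) - b * (sP a b q - sP a b q)) with 0 in E by ring.
    apply Rmult_integral in E as [E|E]; [contradiction|lra].
  - assert (E : (a * a + b * b) * (snd p - snd q) = b * (lin a b p - lin a b q) + a * (sP a b p - sP a b q))
      by (unfold lin, sP; ring).
    rewrite H1, H2 in E. replace (b * (lin a b q - lin a b q) + a * (sP a b q - sP a b q)) with 0 in E by ring.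
    apply Rmult_integral in E as [E|E]; [contradiction|lra].
Qed.

Lemma mid_comb a b c x y z : (a <> 0 \/ b <> 0) -> lin a b x = c -> lin a b y = c -> lin a b z = c ->
  sP a b y < sP a b x < sP a b z -> exists t, 0 < t < 1 /\ x = comb t y z.
Proof.
  intros Hab Hx Hy Hz Hs.
  exists ((sP a b z - sP a b x) / (sP a b z - sP a b y)). split.
  - split; [apply Rdiv_lt_0_compat; lra|].
    apply (Rmult_lt_reg_r (sP a b z - sP a b y)); [lra|]. field_simplify; lra.
  - apply (line_uniq a b); auto.
    + rewrite Hx. unfold lin, comb in *; simpl.
      transitivity ((sP a b z - sP a b x) / (sP a b z - sP a b y) * (a * fst y + b * snd y) +
        (1 - (sP a b z - sP a b x) / (sP a b z - sP a b y)) * (a * fst z + b * snd z)); [|ring].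
      rewrite Hy, Hz. ring.
    + transitivity ((sP a b z - sP a b x) / (sP a b z - sP a b y) * sP a b y +
        (1 - (sP a b z - sP a b x) / (sP a b z - sP a b y)) * sP a b z); [field; lra|].
      unfold sP, comb; simpl; ring.
Qed.

Lemma mid_contra F a b c x y z : (a <> 0 \/ b <> 0) -> vertex F x -> vertex F y -> vertex F z ->
  lin a b x = c -> lin a b y = c -> lin a b z = c -> y <> x ->
  (sP a b y < sP a b x < sP a b z \/ sP a b z < sP a b x < sP a b y) -> False.
Proof.
  intros Hab [Fx Ex] [Fy _] [Fz _] Hx Hy Hz Nyx [Hs|Hs].
  - destruct (mid_comb a b c x y z Hab Hx Hy Hz Hs) as [t [Ht E]].
    apply Nyx. exact (proj1 (Ex y z t Fy Fz Ht E)).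
  - destruct (mid_comb a b c x z y Hab Hx Hz Hy Hs) as [t [Ht E]].
    apply Nyx. exact (proj2 (Ex z y t Fz Fy Ht E)).
Qed.

Lemma no_three F a b c u v w : (a <> 0 \/ b <> 0) -> vertex F u -> vertex F v -> vertex F w ->
  lin a b u = c -> lin a b v = c -> lin a b w = c -> u <> v -> v <> w -> u <> w -> False.
Proof.
  intros Hab Vu Vv Vw Hu Hv Hw Nuv Nvw Nuw.
  assert (Suv : sP a b u <> sP a b v) by (intro E; apply Nuv; apply (line_uniq a b); congruence).
  assert (Svw : sP a b v <> sP a b w) by (intro E; apply Nvw; apply (line_uniq a b); congruence).
  assert (Suw : sP a b u <> sP a b w) by (intro E; apply Nuw; apply (line_uniq a b); congruence).
  destruct (Rlt_dec (sP a b u) (sP a b v)); destruct (Rlt_dec (sP a b v) (sP a b w));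
  destruct (Rlt_dec (sP a b u) (sP a b w)).
  all: first
    [ apply (mid_contra F a b c v u w); auto; lra
    | apply (mid_contra F a b c u v w); auto; lra
    | apply (mid_contra F a b c w u v); auto; lra ].
Qed.

Definition pt_eq_dec (x y : point) : {x = y} + {x <> y}.
Proof.
  destruct x as [x1 x2], y as [y1 y2].
  destruct (Req_EM_T x1 y1) as [->|N1]; [|right; congruence].
  destruct (Req_EM_T x2 y2) as [->|N2]; [left; reflexivity|right; congruence].
Defined.

Lemma vlist (F : point -> Prop) cands : (forall x, vertex F x -> In x cands) ->
  exists l, NoDup l /\ (forall x, In x l <-> vertex F x) /\ incl l cands.
Proof.
  intros H.
  exists (filter (fun x => if excluded_middle_informative (vertex F x) then true else false)
            (nodup pt_eq_dec cands)).
  split; [apply NoDup_filter, NoDup_nodup|]. split.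
  - intros x. rewrite filter_In, nodup_In.
    destruct (excluded_middle_informative (vertex F x)) as [V|V].
    + split; [intros _; exact V|intros _; split; [apply H; auto|reflexivity]].
    + split; [intros [_ E]; discriminate|intros V'; contradiction].
  - intros x Hx. apply filter_In in Hx as [Hx _]. apply nodup_In in Hx. exact Hx.
Qed.

Lemma inner_vertices Q : exists l, NoDup l /\ (forall x, In x l <-> vertex (convl Q) x) /\
  (length l <= length Q)%nat.
Proof.
  destruct (vlist (convl Q) Q) as [l [Hn [Hl Hi]]].
  { intros x [Hx He]. apply (convl_extreme_in (convl Q) Q); auto. }
  exists l. split; auto. split; auto. apply NoDup_incl_length; auto.
Qed.

Definition tb (h : R * R * R) (v : point) : bool :=
  let '(a, b, c) := h in if Req_EM_T (lin a b v) c then true else false.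
Definition tn (h : R * R * R) (v : point) : nat := if tb h v then 1%nat else 0%nat.

Lemma tb_true a b c v : tb (a, b, c) v = true -> lin a b v = c.
Proof. unfold tb. destruct (Req_EM_T (lin a b v) c); auto; discriminate. Qed.

Lemma tn_1 a b c v : lin a b v = c -> tn (a, b, c) v = 1%nat.
Proof. unfold tn, tb. destruct (Req_EM_T (lin a b v) c); auto; contradiction. Qed.

Lemma sum_map_add {A} (f g : A -> nat) l :
  list_sum (map (fun x => (f x + g x)%nat) l) = (list_sum (map f l) + list_sum (map g l))%nat.
Proof. induction l; simpl; [reflexivity|]. rewrite IHl. lia. Qed.

Lemma sum_map_zero {A} (l : list A) : list_sum (map (fun _ => 0%nat) l) = 0%nat.
Proof. induction l; simpl; auto. Qed.

Lemma swap_sum {A B} (f : A -> B -> nat) l m :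
  list_sum (map (fun a => list_sum (map (f a) m)) l) =
  list_sum (map (fun b => list_sum (map (fun a => f a b) l)) m).
Proof.
  induction l as [|a l IH]; simpl.
  - rewrite sum_map_zero. reflexivity.
  - rewrite IH. rewrite (sum_map_add (fun b => f a b) (fun b => list_sum (map (fun a0 => f a0 b) l))).
    reflexivity.
Qed.

Lemma sum_ge {A} k (f : A -> nat) l : (forall x, In x l -> (k <= f x)%nat) ->
  (k * length l <= list_sum (map f l))%nat.
Proof.
  induction l; simpl; intros H; [lia|].
  specialize (H a (or_introl eq_refl)) as H'. assert (IH := IHl (fun x Hx => H x (or_intror Hx))). lia.
Qed.

Lemma sum_le {A} k (f : A -> nat) l : (forall x, In x l -> (f x <= k)%nat) ->
  (list_sum (map f l) <= k * length l)%nat.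
Proof.
  induction l; simpl; intros H; [lia|].
  specialize (H a (or_introl eq_refl)) as H'. assert (IH := IHl (fun x Hx => H x (or_intror Hx))). lia.
Qed.

Lemma sum_ge1 {A} (f : A -> nat) l x : In x l -> f x = 1%nat -> (1 <= list_sum (map f l))%nat.
Proof.
  induction l as [|z l IH]; simpl; intros Hin E; [destruct Hin|].
  destruct Hin as [<-|H]; [lia|]. specialize (IH H E). lia.
Qed.

Lemma count2 {A} (f : A -> nat) l x y : In x l -> In y l -> x <> y -> f x = 1%nat -> f y = 1%nat ->
  (2 <= list_sum (map f l))%nat.
Proof.
  induction l as [|z l IH]; simpl; intros Hx Hy N Ex Ey; [destruct Hx|].
  destruct Hx as [<-|Hx]; destruct Hy as [<-|Hy].
  - contradiction.
  - pose proof (sum_ge1 f l y Hy Ey). lia.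
  - pose proof (sum_ge1 f l x Hx Ex). lia.
  - specialize (IH Hx Hy N Ex Ey). lia.
Qed.

Lemma len_filter {A} (p : A -> bool) l :
  length (filter p l) = list_sum (map (fun x => if p x then 1%nat else 0%nat) l).
Proof. induction l; simpl; [reflexivity|]. destruct (p a); simpl; lia. Qed.

Lemma line_le2 F l a b c : (a <> 0 \/ b <> 0) -> NoDup l -> (forall x, In x l -> vertex F x) ->
  (list_sum (map (tn (a, b, c)) l) <= 2)%nat.
Proof.
  intros Hab Hn Hv. unfold tn. rewrite <- len_filter.
  assert (HL : forall x, In x (filter (tb (a, b, c)) l) -> vertex F x /\ lin a b x = c).
  { intros x Hx. apply filter_In in Hx as [Hx Ht]. split; auto. apply tb_true; auto. }
  assert (HN : NoDup (filter (tb (a, b, c)) l)) by (apply NoDup_filter; auto).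
  destruct (filter (tb (a, b, c)) l) as [|u [|v [|w L]]]; simpl; try lia.
  exfalso.
  destruct (HL u ltac:(simpl; tauto)) as [Vu Hu].
  destruct (HL v ltac:(simpl; tauto)) as [Vv Hv'].
  destruct (HL w ltac:(simpl; tauto)) as [Vw Hw].
  apply NoDup_cons_iff in HN as [N1 HN1]. apply NoDup_cons_iff in HN1 as [N2 _].
  apply (no_three F a b c u v w); auto; intro E; rewrite E in *; simpl in *; tauto.
Qed.

Definition isect (h1 h2 : R * R * R) : point :=
  let '(a1, b1, c1) := h1 in let '(a2, b2, c2) := h2 in
  ((c1 * b2 - c2 * b1) / (a1 * b2 - a2 * b1), (a1 * c2 - a2 * c1) / (a1 * b2 - a2 * b1)).

Lemma outer_vertices hs : nz hs -> exists l, NoDup l /\ (forall x, In x l <-> vertex (hp hs) x) /\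
  (length l <= length hs)%nat.
Proof.
  intros Hnz.
  destruct (vlist (hp hs) (map (fun hh => isect (fst hh) (snd hh)) (list_prod hs hs))) as [l [Hn [Hl _]]].
  { intros x Hx. destruct (vertex_two hs x Hnz Hx) as [a1 [b1 [c1 [a2 [b2 [c2 [H1 [H2 [T1 [T2 D]]]]]]]]]].
    apply in_map_iff. exists ((a1, b1, c1), (a2, b2, c2)). split; [|apply in_prod; auto].
    simpl. rewrite <- T1, <- T2. apply point_eq; simpl; unfold lin; field; auto. }
  exists l. split; auto. split; auto.
  assert (Hlow : (2 * length l <= list_sum (map (fun v => list_sum (map (fun h => tn h v) hs)) l))%nat).
  { apply sum_ge. intros v Hv. apply Hl in Hv.
    destruct (vertex_two hs v Hnz Hv) as [a1 [b1 [c1 [a2 [b2 [c2 [H1 [H2 [T1 [T2 D]]]]]]]]]].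
    apply (count2 (fun h => tn h v) hs (a1, b1, c1) (a2, b2, c2)); auto.
    - intro E; injection E as -> -> ->. apply D; ring.
    - apply tn_1; auto.
    - apply tn_1; auto. }
  assert (Hup : (list_sum (map (fun h => list_sum (map (tn h) l)) hs) <= 2 * length hs)%nat).
  { apply sum_le. intros [[a b] c] Hh. apply (line_le2 (hp hs)); auto.
    - exact (Hnz _ Hh).
    - intros; apply Hl; auto. }
  rewrite (swap_sum (fun v h => tn h v)) in Hlow. simpl in Hlow. assert (E : list_sum (map (fun b => list_sum (map (fun a => tn b a) l)) hs) = list_sum (map (fun h => list_sum (map (tn h) l)) hs)) by reflexivity. lia.
Qed.

Lemma iff_hp_props (F : point -> Prop) hs : (forall x, F x <-> hp hs x) ->
  convex_set F /\ Defs.closed_set F.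
Proof.
  intros H. split.
  - intros x y t Hx Hy Ht. apply H. apply hp_convex; auto; apply H; auto.
  - intros x Hx. destruct (hp_closed hs x) as [e [He Hy]].
    { intro Hh; apply Hx, H, Hh. }
    exists e. split; auto. intros y Hd Fy. apply (Hy y Hd), H, Fy.
Qed.

Lemma tri_interior u h : 0 < h -> forall y, dist2 (fst u + h / 4, snd u + h / 4) y < (h / 8) ^ 2 ->
  convl [u; (fst u + h, snd u); (fst u, snd u + h)] y.
Proof.
  intros Hh y Hy. unfold dist2 in Hy; simpl in Hy.
  assert (H1 : Rabs (fst u + h / 4 - fst y) < h / 8)
    by (apply sq_bound; [lra|]; pose proof (pow2_ge_0 (snd u + h / 4 - snd y)); lra).
  assert (H2 : Rabs (snd u + h / 4 - snd y) < h / 8)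
    by (apply sq_bound; [lra|]; pose proof (pow2_ge_0 (fst u + h / 4 - fst y)); lra).
  apply Rabs_def2 in H1. apply Rabs_def2 in H2.
  set (al := (fst y - fst u) / h). set (be := (snd y - snd u) / h).
  assert (Ha : fst y - fst u = al * h) by (unfold al; field; lra).
  assert (Hb : snd y - snd u = be * h) by (unfold be; field; lra).
  assert (al * h > h / 8 /\ al * h < 3 * h / 8) by lra.
  assert (be * h > h / 8 /\ be * h < 3 * h / 8) by lra.
  assert (1 / 8 < al < 3 / 8) by nra. assert (1 / 8 < be < 3 / 8) by nra.
  exists [1 - al - be; al; be]. simpl. split; [reflexivity|]. split.
  { repeat constructor; lra. }
  split; [ring|]. split; nra.
Qed.

Lemma lin_comb a b t x y : lin a b (comb t x y) = t * lin a b x + (1 - t) * lin a b y.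
Proof. unfold lin, comb; simpl; ring. Qed.

Lemma T_bound a b c s y x0 K D : 0 <= s <= 1 -> lin a b x0 <= c -> lin a b y - c <= K -> s * K <= D ->
  lin a b (comb s y x0) <= c + D.
Proof.
  intros Hs H0 Hy HK. rewrite lin_comb.
  assert ((1 - s) * lin a b x0 <= (1 - s) * c) by (apply Rmult_le_compat_l; lra).
  assert (s * (lin a b y - c) <= s * K) by (apply Rmult_le_compat_l; lra).
  nra.
Qed.

Lemma sep_point a b x0 p : x0 <> p -> a = fst p - fst x0 -> b = snd p - snd x0 -> lin a b x0 < lin a b p.
Proof.
  intros N -> ->. unfold lin.
  assert (fst p - fst x0 <> 0 \/ snd p - snd x0 <> 0).
  { destruct (Req_EM_T (fst p - fst x0) 0); [|left; auto].
    destruct (Req_EM_T (snd p - snd x0) 0); [|right; auto].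
    exfalso; apply N, point_eq; lra. }
  pose proof (Rle_0_sqr (fst p - fst x0)). pose proof (Rle_0_sqr (snd p - snd x0)).
  destruct H as [H|H]; apply Rsqr_pos_lt in H; unfold Rsqr in *; nra.
Qed.

Lemma abs_bounds u M : Rabs u <= M -> u <= M /\ - u <= M.
Proof. unfold Rabs; destruct (Rcase_abs u); lra. Qed.

Lemma adv_inner_core (C : point -> Prop) (Qin : list point) p :
  convex_body C -> (forall q, In q Qin -> C q) -> C p -> ~ convl Qin p ->
  exists C', convex_body C' /\ polygon C' /\ (forall z, C' z -> C z) /\
    (forall q, In q Qin -> C' q) /\ ~ C' p.
Proof.
  intros HC HQ Cp Np. destruct HC as [Hcv [Hcl [[Mb HMb] [c0 [r [Hr Hball]]]]]].
  set (dl := Rmin 1 (r / 2)).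
  assert (Hdl : 0 < dl) by (apply Rmin_glb_lt; lra).
  assert (Hdl1 : dl <= 1) by apply Rmin_l.
  assert (Hdl2 : dl <= r / 2) by apply Rmin_r.
  set (y0 := c0). set (y1 := (fst c0 + dl, snd c0)). set (y2 := (fst c0, snd c0 + dl)).
  assert (C0 : C y0) by (apply Hball; unfold dist2, y0; simpl; nra).
  assert (C1 : C y1) by (apply Hball; unfold dist2, y1; simpl; nra).
  assert (C2 : C y2) by (apply Hball; unfold dist2, y2; simpl; nra).
  assert (Hsep : exists x0 a b c, C x0 /\ lin a b x0 <= c /\ c < lin a b p /\
                   forall q, In q Qin -> lin a b q <= c).
  { destruct Qin as [|q0 Qt] eqn:EQ.
    - destruct (pt_eq_dec y0 p) as [E|E].
      + exists y1, (fst p - fst y1), (snd p - snd y1), (lin (fst p - fst y1) (snd p - snd y1) y1).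
        split; auto. split; [lra|]. split; [|intros ? []].
        apply sep_point; auto. intro E'. rewrite <- E' in E. unfold y0, y1 in E.
        assert (E2 := f_equal fst E). simpl in E2. lra.
      + exists y0, (fst p - fst y0), (snd p - snd y0), (lin (fst p - fst y0) (snd p - snd y0) y0).
        split; auto. split; [lra|]. split; [|intros ? []]. apply sep_point; auto.
    - rewrite <- EQ in *. destruct (convl_hp Qin) as [hs [Hnz Hhs]].
      destruct (hp_violated hs p) as [a [b [c [Hin Hc]]]].
      { intro H; apply Np, Hhs, H. }
      assert (Hall : forall q, In q Qin -> lin a b q <= c).
      { intros q Hq. apply convl_in, Hhs in Hq. exact (Hq _ Hin). }
      exists q0, a, b, c. split; [apply HQ; rewrite EQ; simpl; auto|].
      split; [apply Hall; rewrite EQ; simpl; auto|]. split; auto. }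
  destruct Hsep as [x0 [a [b [c [Cx0 [Hx0 [Hcp HQc]]]]]]].
  set (g := lin a b p).
  set (K := Rabs (lin a b c0) + (Rabs a + Rabs b) * dl + Rabs c + 1).
  assert (HK : 0 < K).
  { unfold K. pose proof (Rabs_pos (lin a b c0)). pose proof (Rabs_pos a). pose proof (Rabs_pos b).
    pose proof (Rabs_pos c). nra. }
  set (s := Rmin 1 ((g - c) / (2 * K))).
  assert (Hs0 : 0 < s) by (apply Rmin_glb_lt; [lra|apply Rdiv_lt_0_compat; unfold g; lra]).
  assert (Hs1 : s <= 1) by apply Rmin_l.
  assert (HsK : s * K <= (g - c) / 2).
  { apply Rle_trans with ((g - c) / (2 * K) * K); [apply Rmult_le_compat_r; [lra|apply Rmin_r]|].
    right; field; lra. }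
  assert (Hy : forall y, (y = y0 \/ y = y1 \/ y = y2) -> lin a b y - c <= K).
  { intros y Hy.
    assert (lin a b c0 <= Rabs (lin a b c0)) by apply Rle_abs.
    assert (- c <= Rabs c) by (rewrite <- Rabs_Ropp; apply Rle_abs).
    assert (a * dl <= Rabs a * dl) by (apply Rmult_le_compat_r; [lra|apply Rle_abs]).
    assert (b * dl <= Rabs b * dl) by (apply Rmult_le_compat_r; [lra|apply Rle_abs]).
    pose proof (Rabs_pos a). pose proof (Rabs_pos b).
    assert (0 <= Rabs b * dl) by (apply Rmult_le_pos; lra).
    assert (0 <= Rabs a * dl) by (apply Rmult_le_pos; lra).
    unfold K. destruct Hy as [-> | [-> | ->]]; unfold y0, y1, y2, lin in *; simpl; lra. }
  set (u := comb s y0 x0). set (h := s * dl).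
  assert (Hh : 0 < h) by (unfold h; nra).
  assert (E1 : (fst u + h, snd u) = comb s y1 x0) by (apply point_eq; unfold u, h, y0, y1, comb; simpl; ring).
  assert (E2 : (fst u, snd u + h) = comb s y2 x0) by (apply point_eq; unfold u, h, y0, y2, comb; simpl; ring).
  set (T := [u; (fst u + h, snd u); (fst u, snd u + h)]).
  assert (HT : forall t, In t T -> exists y, (y = y0 \/ y = y1 \/ y = y2) /\ t = comb s y x0).
  { intros t Ht. unfold T in Ht. simpl in Ht.
    destruct Ht as [<-|[<-|[<-|[]]]]; [exists y0|exists y1|exists y2]; split; auto. }
  exists (convl (Qin ++ T)).
  assert (Hsub : forall z, convl (Qin ++ T) z -> C z).
  { apply convl_sub; auto. intros q Hq. apply in_app_or in Hq as [Hq|Hq]; auto.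
    destruct (HT q Hq) as [y [Hy' ->]]. apply Hcv; [|auto|lra].
    destruct Hy' as [-> | [-> | ->]]; auto. }
  destruct (convl_hp (Qin ++ T)) as [hs [Hnz Hhs]].
  destruct (iff_hp_props _ hs Hhs) as [Hcv' Hcl'].
  split; [|split; [|split; [|split]]].
  - split; [auto|]. split; [auto|]. split.
    + exists Mb. intros x Hx. apply HMb, Hsub, Hx.
    + exists (fst u + h / 4, snd u + h / 4), ((h / 8) ^ 2). split; [nra|].
      intros y Hyd. apply convl_app_r. apply tri_interior; auto.
  - apply convl_polygon.
  - exact Hsub.
  - intros q Hq. apply convl_in. apply in_or_app. auto.
  - intros Hp. assert (Hb : lin a b p <= c + (g - c) / 2).
    { apply (convl_sub (fun z => lin a b z <= c + (g - c) / 2) (Qin ++ T)); auto.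
      - apply halfplane_convex.
      - intros q Hq. apply in_app_or in Hq as [Hq|Hq].
        + specialize (HQc q Hq). unfold g in *. lra.
        + destruct (HT q Hq) as [y [Hy' ->]]. apply (T_bound a b c s y x0 K); auto; lra. }
    unfold g in *. lra.
Qed.

Fixpoint queries (A : algorithm) (O : point -> answer) : list point :=
  match A with Output _ => [] | Query q k => q :: queries (k (O q)) O end.

Lemma nq_len A O : num_queries A O = length (queries A O).
Proof. induction A; simpl; auto. Qed.

Lemma run_agree A O O' : (forall q, In q (queries A O) -> O' q = O q) -> run A O' = run A O.
Proof.
  induction A as [cls|q k IH]; simpl; intros H; auto.
  rewrite (H q (or_introl eq_refl)). apply IH. intros; apply H; auto.
Qed.

Lemma oracle_extend (C' : point -> Prop) qs O : polygon C' ->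
  (forall q, In q qs -> valid_answer C' q (O q)) ->
  exists O', separation_oracle C' O' /\ forall q, In q qs -> O' q = O q.
Proof.
  intros [hs [Hnz Hhs]] Hv.
  assert (H : forall q, exists ans, valid_answer C' q ans /\ (In q qs -> ans = O q)).
  { intros q. destruct (classic (In q qs)) as [Hq|Hq].
    - exists (O q). auto.
    - destruct (classic (C' q)) as [Cq|Cq].
      + exists Inside. simpl. split; auto. intro; contradiction.
      + destruct (hp_violated hs q) as [a [b [c [Hin Hc]]]].
        { intro H; apply Cq, (proj2 (Hhs q)), H. }
        exists (Separate a b c). split; [|intro; contradiction]. simpl.
        split; [exact (Hnz _ Hin)|]. split; [lra|]. intros z Hz. exact (proj1 (Hhs z) Hz (a, b, c) Hin). }
  exists (fun q => proj1_sig (constructive_indefinite_description _ (H q))).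
  split.
  - intros q. exact (proj1 (proj2_sig (constructive_indefinite_description _ (H q)))).
  - intros q Hq. exact (proj2 (proj2_sig (constructive_indefinite_description _ (H q))) Hq).
Qed.

Lemma ex_min (P : nat -> Prop) n : P n -> exists m, P m /\ forall k, P k -> (m <= k)%nat.
Proof.
  induction n as [n IH] using (well_founded_induction Wf_nat.lt_wf). intros Pn.
  destruct (classic (exists k, (k < n)%nat /\ P k)) as [[k [Hk Pk]]|N].
  - exact (IH k Hk Pk).
  - exists n. split; auto. intros k Pk. destruct (Compare_dec.le_lt_dec n k); auto.
    exfalso; apply N; eauto.
Qed.

Lemma min_le (Fence : (point -> Prop) -> Prop) F n : Fence F -> num_vertices F n ->
  (min_vertices Fence <= n)%nat.
Proof.
  intros HF Hn. unfold min_vertices.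
  destruct (ex_min (fun k => exists F, Fence F /\ num_vertices F k) n) as [m [Pm Hm]]; [eauto|].
  assert (Hex : exists k, (exists F, Fence F /\ num_vertices F k) /\
             forall m F, Fence F -> num_vertices F m -> (k <= m)%nat).
  { exists m. split; auto. intros m' F' H1 H2. apply Hm. eauto. }
  destruct (epsilon_spec (inhabits 0%nat) _ Hex) as [_ Hs]. exact (Hs n F HF Hn).
Qed.

Definition isIn (ans : answer) : bool := match ans with Inside => true | _ => false end.
Definition sepOf (ans : answer) : list (R * R * R) :=
  match ans with Inside => [] | Separate a b c => [(a, b, c)] end.

Lemma in_seps (O : point -> answer) (qs : list point) a b c : In (a, b, c) (flat_map (fun q => sepOf (O q)) qs) ->
  exists q, In q qs /\ O q = Separate a b c.
Proof.
  intros H. apply in_flat_map in H as [q [Hq H]]. exists q. split; auto.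
  unfold sepOf in H. destruct (O q); simpl in H; [destruct H|].
  destruct H as [E|[]]. injection E as -> -> ->. reflexivity.
Qed.

Lemma seps_in (O : point -> answer) (qs : list point) q a b c : In q qs -> O q = Separate a b c ->
  In (a, b, c) (flat_map (fun q => sepOf (O q)) qs).
Proof. intros Hq E. apply in_flat_map. exists q. split; auto. rewrite E. simpl; auto. Qed.

Lemma len_split (O : point -> answer) (qs : list point) :
  (length (filter (fun q => isIn (O q)) qs) + length (flat_map (fun q => sepOf (O q)) qs))%nat = length qs.
Proof.
  induction qs as [|q qs IH]; simpl; auto. destruct (O q); simpl; lia.
Qed.

Theorem lemma3p1 (P : list point) (C : point -> Prop) (HC : convex_body C)
  (A : algorithm) (HA : classifies P A)
  (O : point -> answer) (HO : separation_oracle C O) :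
  (price P C <= num_queries A O)%nat.
Proof.
  set (qs := queries A O).
  set (Qin := filter (fun q => isIn (O q)) qs).
  set (seps := flat_map (fun q => sepOf (O q)) qs).
  assert (HQin : forall q, In q Qin -> C q).
  { intros q Hq. apply filter_In in Hq as [_ Hq]. specialize (HO q).
    destruct (O q); [exact HO|discriminate]. }
  assert (Hseps : forall a b c, In (a, b, c) seps -> forall z, C z -> lin a b z <= c).
  { intros a b c H. apply in_seps in H as [q [_ E]]. specialize (HO q). rewrite E in HO.
    exact (proj2 (proj2 HO)). }
  assert (Hnzs : nz seps).
  { intros [[a b] c] H. apply in_seps in H as [q [_ E]]. specialize (HO q). rewrite E in HO.
    exact (proj1 HO). }
  assert (Hinner : inner_fence P C (convl Qin)).
  { split; [apply convl_polygon|]. split.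
    - apply convl_sub; auto. apply HC.
    - intros p Hp. split.
      + intros Cp. apply NNPP; intro Np.
        destruct (adv_inner_core C Qin p HC HQin Cp Np) as [C' [HC' [HP' [Hsub [HQ' NC']]]]].
        destruct (oracle_extend C' qs O HP') as [O' [HO' Hag]].
        { intros q Hq. specialize (HO q). destruct (O q) eqn:E; simpl in *.
          - apply HQ'. apply filter_In. split; auto. rewrite E; reflexivity.
          - destruct HO as [H1 [H2 H3]]. split; auto. }
        apply NC'. apply (HA C' HC' O' HO' p Hp). rewrite (run_agree A O O' Hag).
        apply (HA C HC O HO p Hp). exact Cp.
      + apply convl_sub; auto. apply HC. }
  assert (Houter : outer_fence P C (hp seps)).
  { split; [exists seps; split; auto; tauto|]. split.
    - intros z Hz [[a b] c] Hh. exact (Hseps a b c Hh z Hz).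
    - intros p Hp. split.
      + intros Cp [[a b] c] Hh. exact (Hseps a b c Hh p Cp).
      + intros Hsp.
        destruct HC as [Hcv [Hcl [[Mb HMb] [c0 [r [Hr Hball]]]]]].
        set (M := Rmax Mb (Rmax (Rabs (fst p)) (Rabs (snd p)))).
        set (box := [(1, 0, M); (-1, 0, M); (0, 1, M); (0, -1, M)]).
        set (C' := hp (seps ++ box)).
        assert (HMM : Mb <= M /\ Rabs (fst p) <= M /\ Rabs (snd p) <= M).
        { unfold M. split; [apply Rmax_l|]. split; eapply Rle_trans; [|apply Rmax_r| |apply Rmax_r];
          [apply Rmax_l|apply Rmax_r]. }
        assert (Hbox : forall x, Rabs (fst x) <= M -> Rabs (snd x) <= M -> hp box x).
        { intros x H1 H2. apply abs_bounds in H1. apply abs_bounds in H2.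
          intros h Hh. unfold box in Hh. simpl in Hh.
          destruct Hh as [<-|[<-|[<-|[<-|[]]]]]; unfold lin; lra. }
        assert (Happ : forall x, hp seps x -> hp box x -> C' x).
        { intros x H1 H2 h Hh. apply in_app_or in Hh as [Hh|Hh]; [exact (H1 h Hh)|exact (H2 h Hh)]. }
        assert (Hsub : forall z, C z -> C' z).
        { intros z Hz. apply Happ.
          - intros [[a b] c] Hh. exact (Hseps a b c Hh z Hz).
          - destruct (HMb z Hz). apply Hbox; lra. }
        assert (HC'b : convex_body C').
        { split; [apply hp_convex|]. split; [apply hp_closed|]. split.
          - exists M. intros x Hx.
            assert (B1 := Hx (1, 0, M) ltac:(apply in_or_app; right; simpl; tauto)).
            assert (B2 := Hx (-1, 0, M) ltac:(apply in_or_app; right; simpl; tauto)).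
            assert (B3 := Hx (0, 1, M) ltac:(apply in_or_app; right; simpl; tauto)).
            assert (B4 := Hx (0, -1, M) ltac:(apply in_or_app; right; simpl; tauto)).
            simpl in B1, B2, B3, B4. unfold lin in *.
            split; apply Rabs_le; lra.
          - exists c0, r. split; [exact Hr|]. intros y Hy. apply Hsub, Hball, Hy. }
        assert (HP' : polygon C').
        { exists (seps ++ box). split; [|tauto].
          intros h Hh. apply in_app_or in Hh as [Hh|Hh]; [exact (Hnzs h Hh)|].
          unfold box in Hh. simpl in Hh. destruct Hh as [<-|[<-|[<-|[<-|[]]]]]; simpl; lra. }
        destruct (oracle_extend C' qs O HP') as [O' [HO' Hag]].
        { intros q Hq. specialize (HO q). destruct (O q) eqn:E; simpl in *.
          - apply Hsub; auto.
          - destruct HO as [H1 [H2 H3]]. split; auto. split; auto.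
            intros z Hz. apply (Hz (a, b, c)). apply in_or_app. left. eapply seps_in; eauto. }
        assert (Cp' : C' p) by (apply Happ; auto; apply Hbox; lra).
        assert (HCfull : convex_body C) by (repeat split; auto; [exists Mb; auto|exists c0, r; auto]).
        apply (HA C HCfull O HO p Hp). rewrite <- (run_agree A O O' Hag).
        apply (HA C' HC'b O' HO' p Hp). exact Cp'. }
  destruct (inner_vertices Qin) as [l1 [Hn1 [Hl1 Hle1]]].
  destruct (outer_vertices seps Hnzs) as [l2 [Hn2 [Hl2 Hle2]]].
  assert (M1 := min_le (inner_fence P C) (convl Qin) (length l1) Hinner
                  ltac:(exists l1; auto)).
  assert (M2 := min_le (outer_fence P C) (hp seps) (length l2) Houter
                  ltac:(exists l2; auto)).
  unfold price. rewrite nq_len. fold qs.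
  pose proof (len_split O qs). fold Qin seps in H. lia.
Qed.
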